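(* Let $A=(a^k)_{k\in[n]}$ be a finite collection (multiset) of points $a^k=(a^k_1,a^k_2)\in[0,1]^2$, $n\ge 1$. Then $A$ admits at least one boundaries-included average fixed point, i.e., a point $x\in[0,1]^2$ with $\operatorname{avg}(A\setminus A_{<,<}(x))=x$.
   Context: For a finite nonempty multiset $B\subset[0,1]^2$, $\operatorname{avg}(B)=\frac{1}{|B|}\sum_{b\in B}b$ (counted with multiplicity). For $x\in[0,1]^2$, $A_{<,<}(x)=\{a\in A: a_1<x_1,\ a_2<x_2\}$ (as a sub-multiset of $A$), and $A\setminus A_{<,<}(x)$ is the sub-multiset of the remaining elements. *)

(* Defs.v *)
From mathcomp Require Import all_boot all_order all_algebra.
From mathcomp Require Import reals.
Set Implicit Arguments. Unset Strict Implicit. Unset Printing Implicit Defensive.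
Import Order.TTheory GRing.Theory Num.Theory.
Local Open Scope ring_scope.

(* Points of the plane are pairs (x1, x2) : R * R; multisets are sequences. *)

Definition in_unit_square (R : realType) (a : R * R) : bool :=
  [&& 0 <= a.1, a.1 <= 1, 0 <= a.2 & a.2 <= 1].

Definition ltlt (R : realType) (x a : R * R) : bool := (a.1 < x.1) && (a.2 < x.2).

Definition compl_ltlt (R : realType) (A : seq (R * R)) (x : R * R) : seq (R * R) :=
  [seq a <- A | ~~ ltlt x a].

Definition avg (R : realType) (B : seq (R * R)) : R * R :=
  ((\sum_(b <- B) b.1) / (size B)%:R, (\sum_(b <- B) b.2) / (size B)%:R).

(* Main.v *)
Require Import Defs.
From mathcomp Require Import all_boot all_order all_algebra.
From mathcomp Require Import reals.
Import Order.TTheory GRing.Theory Num.Theory.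
Local Open Scope ring_scope.

Section Aux.
Variable R : realType.
Implicit Types (S : seq (R * R)) (f : R * R -> R).

Lemma sum_cst_count S (P : pred (R * R)) (c : R) :
  \sum_(b <- S | P b) c = c *+ count P S.
Proof.
elim: S => [|b S IH]; first by rewrite big_nil.
rewrite big_cons /= IH; case: (P b) => /=; last by rewrite add0n.
by rewrite mulrS.
Qed.

Lemma sum_split S (q : pred (R * R)) f :
  \sum_(b <- S) f b = \sum_(b <- [seq b <- S | q b]) f b +
                      \sum_(b <- S | ~~ q b) f b.
Proof. by rewrite big_filter (bigID q) /=. Qed.

Lemma key S (q : pred (R * R)) f :
  (0 < size [seq b <- S | q b])%N ->
  (forall b, b \in S -> ~~ q b -> f b <= (\sum_(b <- S) f b) / (size S)%:R) ->
  (\sum_(b <- S) f b) / (size S)%:R <=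
  (\sum_(b <- [seq b <- S | q b]) f b) / (size [seq b <- S | q b])%:R.
Proof.
set c := (\sum_(b <- S) f b) / (size S)%:R.
move=> hm hb.
have hn : (0 < size S)%N.
  by apply: leq_trans hm _; rewrite size_filter count_size.
have eS : \sum_(b <- S) f b = c * (size S)%:R.
  by rewrite /c divfK // pnatr_eq0 -lt0n.
have hle : \sum_(b <- S | ~~ q b) f b <= c *+ count (predC q) S.
  rewrite -sum_cst_count big_seq_cond [X in _ <= X]big_seq_cond.
  by apply: ler_sum => b /andP [bS nq]; exact: hb.
rewrite ler_pdivlMr ?ltr0n //.
have := sum_split S q f; rewrite eS => e.
have hsz : size S = (count q S + count (predC q) S)%N by rewrite count_predC.
move: e; rewrite hsz natrD mulrDr size_filter => e.
rewrite -mulr_natr in hle.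
have : c * (count q S)%:R + c * (count (predC q) S)%:R <=
       \sum_(b <- [seq b <- S | q b]) f b + c * (count (predC q) S)%:R.
  by rewrite e lerD2l.
by rewrite lerD2r.
Qed.

Lemma nonempty_keep S :
  (0 < size S)%N -> (0 < size [seq b <- S | ~~ ltlt (avg S) b])%N.
Proof.
move=> hn; rewrite size_filter -has_count; apply/negPn; rewrite -all_predC; apply/negP => /allP H.
set x := avg S.
have hlt : \sum_(b <- S) b.1 < \sum_(b <- S) x.1.
  rewrite big_seq [X in _ < X]big_seq.
  apply: ltr_sum; first by case: S hn {H x} => // b S _; rewrite /= inE eqxx.
  by move=> b bS; move: (H b bS); rewrite /= negbK => /andP [].
move: hlt; rewrite (sum_cst_count S predT) count_predT -mulr_natr /x /avg /=.
by rewrite divfK ?ltxx // pnatr_eq0 -lt0n.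
Qed.

Lemma avg_square S :
  (0 < size S)%N -> all (@in_unit_square R) S -> in_unit_square (avg S).
Proof.
move=> hn /allP hS.
have hn' : (0 : R) < (size S)%:R by rewrite ltr0n.
have cnt : \sum_(b <- S) (1 : R) = (size S)%:R.
  by rewrite (sum_cst_count S predT) count_predT.
have h : forall f, (forall b, b \in S -> 0 <= f b <= 1) ->
   0 <= (\sum_(b <- S) f b) / (size S)%:R <= 1.
  move=> f hf; apply/andP; split.
    apply: divr_ge0; last exact: ltW.
    by rewrite big_seq; apply: sumr_ge0 => b bS; case/andP: (hf b bS).
  rewrite ler_pdivrMr // mul1r -cnt big_seq [X in _ <= X]big_seq.
  by apply: ler_sum => b bS; case/andP: (hf b bS).
rewrite /in_unit_square /avg /=.
have [/andP [-> ->] /andP [-> ->]] :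
  (0 <= (\sum_(b <- S) b.1) / (size S)%:R <= 1) /\
  (0 <= (\sum_(b <- S) b.2) / (size S)%:R <= 1).
  split; apply: h => b bS; move: (hS b bS);
    by rewrite /in_unit_square => /and4P [? ? ? ?]; apply/andP.
by [].
Qed.

Lemma main A : all (@in_unit_square R) A -> forall k (p : pred (R * R)),
  (size [seq a <- A | p a] <= k)%N -> (0 < size [seq a <- A | p a])%N ->
  (forall a, a \in A -> ~~ p a -> ltlt (avg [seq a <- A | p a]) a) ->
  exists x : R * R,
    [/\ in_unit_square x, (0 < size (compl_ltlt A x))%N & avg (compl_ltlt A x) = x].
Proof.
move=> hA; elim=> [|k IH] p hk hn H; first by move: hn; rewrite leqn0 in hk; rewrite (eqP hk).
set S := [seq a <- A | p a] in hk hn H *.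
set x := avg S.
have eC : compl_ltlt A x = [seq b <- S | ~~ ltlt x b].
  rewrite /compl_ltlt /S -filter_predI; apply: eq_in_filter => a aA /=.
  by case pa: (p a); rewrite ?andbT ?andbF //= (H a aA) ?pa.
have hSsq : all (@in_unit_square R) S.
  by apply/allP => b; rewrite mem_filter => /andP [_ bA]; exact: (allP hA).
case: (boolP (all (fun b => ~~ ltlt x b) S)) => hall.
  exists x; rewrite eC (all_filterP hall); split => //.
  exact: avg_square.
have e' : [seq a <- A | p a && ~~ ltlt x a] = [seq b <- S | ~~ ltlt x b].
  by rewrite /S -filter_predI; apply: eq_filter => a /=; rewrite andbC.
have hlt : (size [seq b <- S | ~~ ltlt x b] < size S)%N.
  rewrite size_filter ltn_neqAle count_size andbT.
  by move: hall; rewrite all_count.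
apply: (IH (fun a => p a && ~~ ltlt x a)); rewrite e'.
- by rewrite -ltnS; apply: leq_trans hlt hk.
- exact: nonempty_keep.
move=> a aA hpa.
have hx : ltlt x a.
  by case pa: (p a) hpa => /=; [rewrite negbK | move=> _; apply: H; rewrite ?pa].
have nk := @nonempty_keep S hn; rewrite -/x in nk.
move: hx; rewrite /ltlt => /andP [h1 h2]; apply/andP; split.
  apply: (lt_le_trans h1); apply: (@key S (fun b => ~~ ltlt x b) fst) => // b bS.
  by rewrite negbK => /andP [/ltW].
apply: (lt_le_trans h2); apply: (@key S (fun b => ~~ ltlt x b) snd) => // b bS.
by rewrite negbK => /andP [_ /ltW].
Qed.

End Aux.

Theorem lemma1 (R : realType) (A : seq (R * R)) :
  (0 < size A)%N -> all (@in_unit_square R) A ->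
  exists x : R * R,
    [/\ in_unit_square x, (0 < size (compl_ltlt A x))%N & avg (compl_ltlt A x) = x].
Proof.
move=> hn hA.
by apply: (@main R A hA (size A) predT); rewrite filter_predT.
Qed.
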